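(* Let $(\mathcal I,T)$ be of class $\mathcal{DRI}$, and let $\eta_n=\sup\{|g'(x)|:g\in\mathcal G^n,x\in\mathcal I\}$. (a) If $b'(0)>-1$, then $\eta_1<1$. If $b'(0)=-1$, then $\eta_1=1$ and $\eta_2<1$. (b) For all $n\ge2$, $$\eta_n\le\underline\eta_2^{\,1+\lfloor(n-2)/2\rfloor},\qquad\text{where }\underline\eta_2=\min(\eta_1^2,\eta_2)<1.$$
   Context: Let $\mathcal I=[0,1]$. A binary dynamical system is given by $c\in]0,1[$ and two $C^2$ bijections, $a:[0,1]\to[0,c]$ and $b:[0,1]\to[c,1]$. The map $T$ equals $a^{-1}$ on $]0,c[$ and $b^{-1}$ on $]c,1[$. Class $\mathcal{DR}$: $a$ is increasing, $b$ is decreasing, $a(0)=0$, $a(1)=c$, $b(0)=1$, $b(1)=c$, $a'>0$ and $b'<0$ on $[0,1]$, and $a'(x)<1$, $b'(x)>-1$ for $x\in]0,1]$. Class $\mathcal{DRI}$: class $\mathcal{DR}$ with moreover $a'(0)=1$. The block inverse branches are $g_m=a^{m-1}\circ b$ for $m\ge1$. $\mathcal G^n$ is the set of compositions $g_{m_1}\circ\cdots\circ g_{m_n}$ with $m_i\ge1$. *)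

(* Defs.v *)
From Stdlib Require Import Reals List.
Open Scope R_scope.

Definition inI (x : R) : Prop := 0 <= x <= 1.

Definition deriv_within_I (f : R -> R) (x d : R) : Prop :=
  forall eps, 0 < eps -> exists delta, 0 < delta /\
    forall y, inI y -> 0 < Rabs (y - x) < delta ->
      Rabs ((f y - f x) / (y - x) - d) < eps.

Definition deriv_on_I (f f' : R -> R) : Prop :=
  forall x, inI x -> deriv_within_I f x (f' x).

Definition cont_on_I (f : R -> R) : Prop :=
  forall x, inI x -> forall eps, 0 < eps -> exists delta, 0 < delta /\
    forall y, inI y -> Rabs (y - x) < delta -> Rabs (f y - f x) < eps.

Definition C2_on_I (f f' : R -> R) : Prop :=
  deriv_on_I f f' /\ exists f'', deriv_on_I f' f'' /\ cont_on_I f''.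

Definition bij_onto (f : R -> R) (lo hi : R) : Prop :=
  (forall x, inI x -> lo <= f x <= hi) /\
  (forall x y, inI x -> inI y -> f x = f y -> x = y) /\
  (forall z, lo <= z <= hi -> exists x, inI x /\ f x = z).

Definition class_DR (c : R) (a a' b b' : R -> R) : Prop :=
  0 < c < 1 /\
  C2_on_I a a' /\ C2_on_I b b' /\
  bij_onto a 0 c /\ bij_onto b c 1 /\
  (forall x y, inI x -> inI y -> x < y -> a x < a y) /\
  (forall x y, inI x -> inI y -> x < y -> b y < b x) /\
  a 0 = 0 /\ a 1 = c /\ b 0 = 1 /\ b 1 = c /\
  (forall x, inI x -> 0 < a' x) /\ (forall x, inI x -> b' x < 0) /\
  (forall x, 0 < x <= 1 -> a' x < 1) /\ (forall x, 0 < x <= 1 -> -1 < b' x).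

Definition class_DRI (c : R) (a a' b b' : R -> R) : Prop :=
  class_DR c a a' b b' /\ a' 0 = 1.

Fixpoint iterf (n : nat) (f : R -> R) (x : R) : R :=
  match n with O => x | S k => f (iterf k f x) end.

Definition gblock (a b : R -> R) (m : nat) : R -> R :=
  fun x => iterf (Nat.pred m) a (b x).

(* g_{m_1} o ... o g_{m_n} for ms = [m_1; ...; m_n] *)
Definition gcomp (a b : R -> R) (ms : list nat) : R -> R :=
  fold_right (fun m h => fun x => gblock a b m (h x)) (fun x => x) ms.

Definition deriv_set (a b : R -> R) (n : nat) (r : R) : Prop :=
  exists ms : list nat, length ms = n /\ Forall (fun m => (1 <= m)%nat) ms /\
  exists x d, inI x /\ deriv_within_I (gcomp a b ms) x d /\ r = Rabs d.

(* Main.v *)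
Require Import Defs.
From Stdlib Require Import Reals List Lra Lia.
Open Scope R_scope.

Definition lin_deriv (f : R -> R) (x d : R) : Prop :=
  forall eps, 0 < eps -> exists delta, 0 < delta /\
    forall y, inI y -> Rabs (y - x) < delta ->
      Rabs (f y - f x - d * (y - x)) <= eps * Rabs (y - x).

Lemma dw_lin f x d : deriv_within_I f x d -> lin_deriv f x d.
Proof.
  intros H eps Heps. destruct (H eps Heps) as [del [Hdel Hy]].
  exists del; split; auto. intros y Iy Hyx.
  destruct (Req_dec y x) as [->|Hne].
  - replace (x - x) with 0 by ring. rewrite Rabs_R0.
    replace (f x - f x - d * 0) with 0 by ring. rewrite Rabs_R0. lra.
  - assert (Hh : y - x <> 0) by lra.
    assert (Hp : 0 < Rabs (y - x)) by (apply Rabs_pos_lt; auto).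
    specialize (Hy y Iy (conj Hp Hyx)).
    replace (f y - f x - d * (y - x)) with (((f y - f x) / (y - x) - d) * (y - x))
      by (field; auto).
    rewrite Rabs_mult. apply Rmult_le_compat_r; [apply Rabs_pos|lra].
Qed.

Lemma lin_dw f x d : lin_deriv f x d -> deriv_within_I f x d.
Proof.
  intros H eps Heps. destruct (H (eps/2)) as [del [Hd Hy]]; [lra|].
  exists del; split; auto. intros y Iy [H0 H1].
  specialize (Hy y Iy H1).
  assert (Hh : y - x <> 0) by (intro E; rewrite E, Rabs_R0 in H0; lra).
  replace ((f y - f x) / (y - x) - d) with ((f y - f x - d * (y - x)) * / (y - x))
    by (field; auto).
  rewrite Rabs_mult, Rabs_inv.
  set (r := Rabs (y - x)) in *.
  apply Rmult_lt_reg_r with r; auto.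
  rewrite Rmult_assoc, Rinv_l by lra. nra.
Qed.

Lemma lin_cont f x d : lin_deriv f x d -> exists del, 0 < del /\
  forall y, inI y -> Rabs (y - x) < del -> Rabs (f y - f x) <= (Rabs d + 1) * Rabs (y - x).
Proof.
  intros H. destruct (H 1) as [del [Hd Hy]]; [lra|]. exists del; split; auto.
  intros y Iy Hyx. specialize (Hy y Iy Hyx).
  replace (f y - f x) with ((f y - f x - d * (y - x)) + d * (y - x)) by ring.
  eapply Rle_trans; [apply Rabs_triang|]. rewrite Rabs_mult. lra.
Qed.

Lemma lin_comp f g x d1 d2 : inI x -> (forall y, inI y -> inI (f y)) ->
  lin_deriv f x d1 -> lin_deriv g (f x) d2 -> lin_deriv (fun y => g (f y)) x (d2 * d1).
Proof.
  intros Ix If Hf Hg eps Heps.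
  set (K := Rabs d1 + 1).
  assert (HK : 0 < K) by (unfold K; pose proof (Rabs_pos d1); lra).
  pose proof (Rabs_pos d2) as Hd2p.
  destruct (Hg (eps / (2 * K))) as [e2 [He2 Hg']].
  { apply Rdiv_lt_0_compat; lra. }
  set (e1 := eps / (2 * (Rabs d2 + 1))).
  assert (He1 : 0 < e1) by (unfold e1; apply Rdiv_lt_0_compat; lra).
  destruct (Hf (Rmin 1 e1)) as [e1' [He1' Hf']].
  { apply Rmin_pos; lra. }
  exists (Rmin e1' (e2 / K)). split.
  { apply Rmin_pos; auto. apply Rdiv_lt_0_compat; lra. }
  intros y Iy Hy.
  assert (Hy1 : Rabs (y - x) < e1') by (eapply Rlt_le_trans; [apply Hy|apply Rmin_l]).
  assert (Hy2 : Rabs (y - x) < e2 / K) by (eapply Rlt_le_trans; [apply Hy|apply Rmin_r]).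
  specialize (Hf' y Iy Hy1).
  pose proof (Rmin_l 1 e1). pose proof (Rmin_r 1 e1).
  set (r := Rabs (y - x)) in *.
  assert (Hr : 0 <= r) by apply Rabs_pos.
  assert (Hfy : Rabs (f y - f x) <= K * r).
  { replace (f y - f x) with ((f y - f x - d1 * (y - x)) + d1 * (y - x)) by ring.
    eapply Rle_trans; [apply Rabs_triang|]. rewrite Rabs_mult. fold r. unfold K.
    assert (Rmin 1 e1 * r <= r) by nra. lra. }
  assert (Hfy2 : Rabs (f y - f x) < e2).
  { eapply Rle_lt_trans; [apply Hfy|].
    apply Rmult_lt_reg_r with (/ K); [apply Rinv_0_lt_compat; lra|].
    replace (K * r * / K) with r by (field; lra). exact Hy2. }
  specialize (Hg' (f y) (If y Iy) Hfy2).
  replace (g (f y) - g (f x) - d2 * d1 * (y - x)) with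
    ((g (f y) - g (f x) - d2 * (f y - f x)) + d2 * (f y - f x - d1 * (y - x))) by ring.
  eapply Rle_trans; [apply Rabs_triang|]. rewrite Rabs_mult.
  assert (A1 : eps / (2 * K) * Rabs (f y - f x) <= eps / 2 * r).
  { replace (eps / 2 * r) with (eps / (2 * K) * (K * r)) by (field; lra).
    apply Rmult_le_compat_l; auto. apply Rlt_le, Rdiv_lt_0_compat; lra. }
  assert (A2 : Rabs d2 * e1 <= eps / 2).
  { unfold e1. replace (Rabs d2 * (eps / (2 * (Rabs d2 + 1)))) with
      (eps / 2 - eps / (2 * (Rabs d2 + 1))) by (field; lra).
    fold e1. lra. }
  assert (A3 : Rabs d2 * Rabs (f y - f x - d1 * (y - x)) <= eps / 2 * r).
  { apply Rle_trans with (Rabs d2 * (e1 * r)).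
    - apply Rmult_le_compat_l; auto. apply Rle_trans with (Rmin 1 e1 * r); auto. nra.
    - nra. }
  lra.
Qed.

Lemma near_pt x del : inI x -> 0 < del -> exists y, inI y /\ 0 < Rabs (y - x) < del.
Proof.
  intros [H0 H1] Hd. set (h := Rmin (del/2) (1/2)).
  assert (Hh : 0 < h) by (apply Rmin_pos; lra).
  pose proof (Rmin_l (del/2) (1/2)). pose proof (Rmin_r (del/2) (1/2)). fold h in H, H2.
  destruct (Rle_dec x (1/2)).
  - exists (x + h). replace (x + h - x) with h by ring. rewrite Rabs_right by lra.
    unfold inI; lra.
  - exists (x - h). replace (x - h - x) with (- h) by ring. rewrite Rabs_Ropp, Rabs_right by lra.
    unfold inI; lra.
Qed.

Lemma lin_unique f x d e : inI x -> lin_deriv f x d -> lin_deriv f x e -> d = e.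
Proof.
  intros Ix Hd He. destruct (Req_dec d e) as [|Hne]; auto. exfalso.
  assert (Hp : 0 < Rabs (d - e)) by (apply Rabs_pos_lt; lra).
  destruct (Hd (Rabs (d - e) / 4)) as [d1 [Hd1 H1]]; [lra|].
  destruct (He (Rabs (d - e) / 4)) as [d2 [Hd2 H2]]; [lra|].
  destruct (near_pt x (Rmin d1 d2) Ix) as [y [Iy [Hy0 Hy1]]]; [apply Rmin_pos; auto|].
  pose proof (Rmin_l d1 d2). pose proof (Rmin_r d1 d2).
  specialize (H1 y Iy ltac:(lra)). specialize (H2 y Iy ltac:(lra)).
  assert (Rabs ((d - e) * (y - x)) <= Rabs (d - e) / 2 * Rabs (y - x)).
  { replace ((d - e) * (y - x)) with ((f y - f x - e * (y - x)) + - (f y - f x - d * (y - x))) by ring.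
    eapply Rle_trans; [apply Rabs_triang|]. rewrite Rabs_Ropp. lra. }
  rewrite Rabs_mult in H3. nra.
Qed.

Definition clamp x := Rmax 0 (Rmin 1 x).
Lemma clamp_I x : inI (clamp x).
Proof. unfold clamp, inI, Rmax, Rmin. repeat destruct Rle_dec; lra. Qed.
Lemma clamp_id x : inI x -> clamp x = x.
Proof. unfold clamp, inI, Rmax, Rmin. intros. repeat destruct Rle_dec; lra. Qed.
Lemma clamp_lip x y : Rabs (clamp x - clamp y) <= Rabs (x - y).
Proof. unfold clamp, Rmax, Rmin. repeat destruct Rle_dec; unfold Rabs; repeat destruct Rcase_abs; lra. Qed.

Lemma evt (f : R -> R) p q : 0 <= p <= q -> q <= 1 ->
  (forall x, inI x -> exists del K, 0 < del /\ forall y, inI y -> Rabs (y - x) < del ->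
     Rabs (f y - f x) <= K * Rabs (y - x)) ->
  exists z, p <= z <= q /\ forall t, p <= t <= q -> f t <= f z.
Proof.
  intros Hpq Hq Hc.
  destruct (continuity_ab_maj (fun x => f (clamp x)) p q) as [M [HM1 HM2]]; [lra| |].
  - intros c0 Hc0. assert (I0 : inI c0) by (unfold inI; lra).
    destruct (Hc c0 I0) as [del [K [Hdel HK]]].
    unfold continuity_pt, continue_in, limit1_in, limit_in; simpl. unfold R_dist.
    intros eps Heps. set (K' := Rabs K + 1).
    assert (HK' : 0 < K') by (unfold K'; pose proof (Rabs_pos K); lra).
    exists (Rmin del (eps / K')). split.
    { apply Rlt_gt, Rmin_pos; auto. apply Rdiv_lt_0_compat; lra. }
    intros x [_ Hx]. pose proof (Rmin_l del (eps/K')). pose proof (Rmin_r del (eps/K')).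
    rewrite (clamp_id c0 I0).
    pose proof (clamp_lip x c0) as Hl. rewrite (clamp_id c0 I0) in Hl.
    specialize (HK (clamp x) (clamp_I x) ltac:(lra)).
    eapply Rle_lt_trans; [apply HK|].
    apply Rle_lt_trans with (K' * Rabs (x - c0)).
    + apply Rle_trans with (K' * Rabs (clamp x - c0)).
      * apply Rmult_le_compat_r; [apply Rabs_pos|]. unfold K'. pose proof (RRle_abs K); lra.
      * apply Rmult_le_compat_l; lra.
    + apply Rmult_lt_reg_r with (/ K'); [apply Rinv_0_lt_compat; lra|].
      replace (K' * Rabs (x - c0) * / K') with (Rabs (x - c0)) by (field; lra).
      unfold Rdiv in H0. lra.
  - exists M. split; auto. intros t Ht. specialize (HM1 t Ht).
    rewrite !clamp_id in HM1; auto; unfold inI; lra.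
Qed.

Fixpoint Diter (a a' : R -> R) (k : nat) (z : R) : R :=
  match k with O => 1 | S k => a' (iterf k a z) * Diter a a' k z end.
Definition Dblock (a a' b b' : R -> R) (m : nat) (y : R) : R :=
  Diter a a' (Nat.pred m) (b y) * b' y.
Fixpoint Dcomp (a a' b b' : R -> R) (ms : list nat) (x : R) : R :=
  match ms with nil => 1
  | m :: ms => Dblock a a' b b' m (gcomp a b ms x) * Dcomp a a' b b' ms x end.

Lemma lin_id x : lin_deriv (fun y => y) x 1.
Proof. intros eps He. exists 1. split; [lra|]. intros y _ _.
  replace (y - x - 1 * (y - x)) with 0 by ring. rewrite Rabs_R0.
  pose proof (Rabs_pos (y - x)). nra. Qed.

Lemma iter_I a k z : (forall y, inI y -> inI (a y)) -> inI z -> inI (iterf k a z).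
Proof. intros Ha Hz. induction k; simpl; auto. Qed.

Lemma lin_iter a a' k z : (forall y, inI y -> inI (a y)) ->
  (forall y, inI y -> lin_deriv a y (a' y)) -> inI z ->
  lin_deriv (iterf k a) z (Diter a a' k z).
Proof.
  intros HaI Ha Hz. induction k.
  - exact (lin_id z).
  - simpl. apply (lin_comp (iterf k a) a z); auto.
    + intros; apply iter_I; auto.
    + apply Ha, iter_I; auto.
Qed.

Lemma gcomp_I a b ms x : (forall y, inI y -> inI (a y)) -> (forall y, inI y -> inI (b y)) ->
  inI x -> inI (gcomp a b ms x).
Proof. intros Ha Hb Hx. induction ms; simpl; auto. unfold gblock. apply iter_I; auto. Qed.

Lemma lin_gcomp a a' b b' ms x : (forall y, inI y -> inI (a y)) ->
  (forall y, inI y -> inI (b y)) ->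
  (forall y, inI y -> lin_deriv a y (a' y)) -> (forall y, inI y -> lin_deriv b y (b' y)) ->
  inI x -> lin_deriv (gcomp a b ms) x (Dcomp a a' b b' ms x).
Proof.
  intros HaI HbI Ha Hb Hx. induction ms as [|m ms IH].
  - exact (lin_id x).
  - simpl. apply (lin_comp (gcomp a b ms) (gblock a b m) x); auto.
    + intros; apply gcomp_I; auto.
    + unfold Dblock, gblock.
      apply (lin_comp b (iterf (Nat.pred m) a)).
      * apply gcomp_I; auto.
      * auto.
      * apply Hb, gcomp_I; auto.
      * apply lin_iter; auto. apply HbI, gcomp_I; auto.
Qed.

Lemma Diter_bounds a a' k z : (forall y, inI y -> inI (a y)) ->
  (forall y, inI y -> 0 < a' y <= 1) -> inI z -> 0 <= Diter a a' k z <= 1.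
Proof.
  intros HaI Ha Hz. induction k; simpl; [lra|].
  pose proof (Ha _ (iter_I a k z HaI Hz)). nra.
Qed.

Lemma Diter_first a a' k z : (forall y, inI y -> inI (a y)) ->
  (forall y, inI y -> 0 < a' y <= 1) -> inI z -> Diter a a' (S k) z <= a' z.
Proof.
  intros HaI Ha Hz. induction k; simpl; [lra|].
  pose proof (Ha _ (iter_I a (S k) z HaI Hz)). simpl in H, IHk.
  pose proof (Diter_bounds a a' (S k) z HaI Ha Hz). simpl in H0. nra.
Qed.

Lemma div2SS k : (S (S k) / 2 = S (k / 2))%nat.
Proof. replace (S (S k)) with (k + 1 * 2)%nat by lia. rewrite Nat.div_add by lia. lia. Qed.

Theorem lemma7p3 (c : R) (a a' b b' : R -> R) (eta : nat -> R) :
  class_DRI c a a' b b' ->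
  (forall n, (1 <= n)%nat -> is_lub (deriv_set a b n) (eta n)) ->
  ((b' 0 > -1 -> eta 1%nat < 1) /\
   (b' 0 = -1 -> eta 1%nat = 1 /\ eta 2%nat < 1)) /\
  (forall n, (2 <= n)%nat ->
     eta n <= (Rmin (eta 1%nat ^ 2) (eta 2%nat)) ^ (1 + (n - 2) / 2) /\
     Rmin (eta 1%nat ^ 2) (eta 2%nat) < 1).
Proof.
  intros [HDR Ha0] Heta.
  destruct HDR as (Hc & [Hda [a'' [Hda' _]]] & [Hdb [b'' [Hdb' _]]] & [HaR _] & [HbR _]
    & _ & _ & _ & _ & _ & _ & Hapos & Hbneg & Halt & Hbgt).
  assert (HaI : forall y, inI y -> inI (a y)) by (intros y Hy; specialize (HaR y Hy); unfold inI; lra).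
  assert (HbI : forall y, inI y -> inI (b y)) by (intros y Hy; specialize (HbR y Hy); unfold inI; lra).
  assert (Ha : forall y, inI y -> lin_deriv a y (a' y)) by (intros; apply dw_lin; auto).
  assert (Hb : forall y, inI y -> lin_deriv b y (b' y)) by (intros; apply dw_lin; auto).
  assert (Hca : forall x, inI x -> exists del K, 0 < del /\ forall y, inI y -> Rabs (y - x) < del ->
     Rabs (a' y - a' x) <= K * Rabs (y - x)).
  { intros x Hx. destruct (lin_cont _ _ _ (dw_lin _ _ _ (Hda' x Hx))) as [del [Hd H]].
    exists del, (Rabs (a'' x) + 1). auto. }
  assert (Hcb : forall x, inI x -> exists del K, 0 < del /\ forall y, inI y -> Rabs (y - x) < del ->
     Rabs ((fun t => - b' t) y - (fun t => - b' t) x) <= K * Rabs (y - x)).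
  { intros x Hx. destruct (lin_cont _ _ _ (dw_lin _ _ _ (Hdb' x Hx))) as [del [Hd H]].
    exists del, (Rabs (b'' x) + 1). split; auto. intros y Hy Hyx.
    replace (- b' y - - b' x) with (- (b' y - b' x)) by ring. rewrite Rabs_Ropp. auto. }
  assert (Ha1 : forall y, inI y -> 0 < a' y <= 1).
  { intros y Hy. split; auto. destruct (Req_dec y 0) as [->|]; [lra|].
    apply Rlt_le, Halt. unfold inI in Hy; lra. }
  assert (Hb0 : -1 <= b' 0).
  { destruct (Rle_dec (-1) (b' 0)) as [|Hn]; auto. exfalso.
    assert (I0 : inI 0) by (unfold inI; lra).
    destruct (Hcb 0 I0) as [del [K [Hd HK]]]. simpl in HK.
    set (s := -1 - b' 0). set (K' := Rabs K + 1).
    assert (HK' : 0 < K') by (unfold K'; pose proof (Rabs_pos K); lra).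
    set (y := Rmin (del/2) (Rmin 1 (s / (2 * K')))).
    assert (Hy0 : 0 < y) by (apply Rmin_pos; [lra|apply Rmin_pos; [lra|apply Rdiv_lt_0_compat; unfold s; lra]]).
    pose proof (Rmin_l (del/2) (Rmin 1 (s / (2 * K')))). pose proof (Rmin_r (del/2) (Rmin 1 (s / (2 * K')))).
    pose proof (Rmin_l 1 (s / (2 * K'))). pose proof (Rmin_r 1 (s / (2 * K'))). fold y in H, H0.
    assert (Iy : inI y) by (unfold inI; lra).
    specialize (HK y Iy). replace (y - 0) with y in HK by ring. rewrite Rabs_right in HK by lra.
    specialize (HK ltac:(lra)).
    assert (K * y <= s / 2).
    { apply Rle_trans with (K' * y). { unfold K'; pose proof (RRle_abs K); nra. }
      apply Rle_trans with (K' * (s / (2 * K'))). { apply Rmult_le_compat_l; lra. }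
      right; field; lra. }
    assert (Rabs (- b' y - - b' 0) <= s / 2) by lra.
    pose proof (Rle_abs (- (- b' y - - b' 0))); rewrite Rabs_Ropp in *; try lra. specialize (Hbgt y ltac:(lra)). unfold s in *; lra. }
  assert (Hb1 : forall y, inI y -> -1 <= b' y <= 0).
  { intros y Hy. split; [|apply Rlt_le; auto]. destruct (Req_dec y 0) as [->|]; auto.
    apply Rlt_le, Hbgt. unfold inI in Hy; lra. }
  destruct (evt a' c 1) as [za [Hza Hmaxa]]; try lra; auto.
  destruct (evt (fun t => - b' t) c 1) as [zb [Hzb Hmaxb]]; try lra; auto.
  destruct (evt (fun t => - b' t) 0 1) as [zg [Hzg Hmaxg]]; try lra; auto.
  simpl in Hmaxb, Hmaxg.
  set (al := a' za) in *. set (be := - b' zb) in *. set (ga := - b' zg) in *.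
  assert (Hal : al < 1) by (apply Halt; lra).
  assert (Hbe : be < 1) by (unfold be; specialize (Hbgt zb ltac:(lra)); lra).
  assert (HB1 : forall m y, inI y -> Rabs (Dblock a a' b b' m y) <= 1).
  { intros m y Hy. unfold Dblock. rewrite Rabs_mult.
    pose proof (Diter_bounds a a' (Nat.pred m) (b y) HaI Ha1 (HbI y Hy)).
    pose proof (Hb1 y Hy). rewrite Rabs_right by lra. rewrite Rabs_left1 by lra. nra. }
  assert (HBa : forall m y, (2 <= m)%nat -> inI y -> Rabs (Dblock a a' b b' m y) <= al).
  { intros m y Hm Hy. unfold Dblock. destruct m as [|[|m]]; try lia. simpl Nat.pred.
    rewrite Rabs_mult.
    pose proof (Diter_bounds a a' (S m) (b y) HaI Ha1 (HbI y Hy)).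
    pose proof (Diter_first a a' m (b y) HaI Ha1 (HbI y Hy)).
    pose proof (Hmaxa (b y) ltac:(specialize (HbR y Hy); lra)).
    pose proof (Hb1 y Hy). rewrite Rabs_right by lra. rewrite Rabs_left1 by lra. nra. }
  assert (HD1 : forall y, Dblock a a' b b' 1 y = b' y) by (intros; unfold Dblock; simpl; ring).
  assert (Hmem : forall ms x, Forall (fun m => (1 <= m)%nat) ms -> inI x ->
     deriv_set a b (length ms) (Rabs (Dcomp a a' b b' ms x))).
  { intros ms x HF Hx. exists ms. split; auto. split; auto. exists x, (Dcomp a a' b b' ms x).
    split; auto. split; auto. apply lin_dw, lin_gcomp; auto. }
  assert (HUB : forall ms x, Forall (fun m => (1 <= m)%nat) ms -> (1 <= length ms)%nat -> inI x ->
     Rabs (Dcomp a a' b b' ms x) <= eta (length ms)).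
  { intros ms x HF Hl Hx. apply (proj1 (Heta _ Hl)). apply Hmem; auto. }
  assert (HLUB : forall n M, (1 <= n)%nat -> (forall ms x, Forall (fun m => (1 <= m)%nat) ms ->
     length ms = n -> inI x -> Rabs (Dcomp a a' b b' ms x) <= M) -> eta n <= M).
  { intros n M Hn H. apply (proj2 (Heta n Hn)). intros r [ms [Hl [HF [x [d [Hx [Hd ->]]]]]]].
    rewrite (lin_unique (gcomp a b ms) x d (Dcomp a a' b b' ms x) Hx (dw_lin _ _ _ Hd)
      (lin_gcomp a a' b b' ms x HaI HbI Ha Hb Hx)).
    apply H; auto. }
  assert (I0 : inI 0) by (unfold inI; lra).
  assert (E1 : forall m x, Dcomp a a' b b' (m :: nil) x = Dblock a a' b b' m x)
    by (intros; simpl; ring).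
  assert (E2 : forall m1 m2 x, Dcomp a a' b b' (m1 :: m2 :: nil) x =
     Dblock a a' b b' m1 (gblock a b m2 x) * Dblock a a' b b' m2 x)
    by (intros; simpl; ring).
  assert (Heta1le : eta 1%nat <= 1).
  { apply HLUB; auto. intros ms x HF Hl Hx. destruct ms as [|m [|]]; simpl in Hl; try lia.
    rewrite E1. auto. }
  assert (Heta1ge : Rabs (b' 0) <= eta 1%nat).
  { rewrite <- HD1, <- E1. apply (HUB (1%nat :: nil)); simpl; auto. }
  assert (Heta2ge : 0 <= eta 2%nat).
  { apply Rle_trans with (Rabs (Dcomp a a' b b' (1%nat :: 1%nat :: nil) 0)); [apply Rabs_pos|].
    apply (HUB (1%nat :: 1%nat :: nil)); simpl; auto. }
  assert (Heta1pos : 0 <= eta 1%nat) by (pose proof (Rabs_pos (b' 0)); lra).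
  assert (PA1 : b' 0 > -1 -> eta 1%nat < 1).
  { intros Hg. assert (Hga : ga < 1).
    { unfold ga. destruct (Req_dec zg 0) as [->|]; [lra|]. specialize (Hbgt zg ltac:(lra)). lra. }
    apply Rle_lt_trans with (Rmax al ga); [|apply Rmax_lub_lt; auto].
    apply HLUB; auto. intros ms x HF Hl Hx. destruct ms as [|m [|]]; simpl in Hl; try lia.
    rewrite E1. inversion HF; subst. destruct m as [|[|m]]; try lia.
    - rewrite HD1. specialize (Hmaxg x Hx). pose proof (Hb1 x Hx).
      rewrite Rabs_left1 by lra. apply Rle_trans with ga; [lra|apply Rmax_r].
    - apply Rle_trans with al; [apply HBa; auto; lia|apply Rmax_l]. }
  assert (PA2 : b' 0 = -1 -> eta 1%nat = 1 /\ eta 2%nat < 1).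
  { intros Hg. split.
    - assert (Rabs (b' 0) = 1) by (rewrite Hg, Rabs_left; lra). lra.
    - apply Rle_lt_trans with (Rmax al be); [|apply Rmax_lub_lt; auto].
      apply HLUB; auto. intros ms x HF Hl Hx. destruct ms as [|m1 [|m2 []]]; simpl in Hl; try lia.
      rewrite E2. inversion HF; subst. inversion H2; subst.
      assert (Iy : inI (gblock a b m2 x)) by (apply (gcomp_I a b (m2 :: nil)); auto).
      rewrite Rabs_mult.
      pose proof (HB1 m1 _ Iy). pose proof (HB1 m2 x Hx).
      pose proof (Rabs_pos (Dblock a a' b b' m1 (gblock a b m2 x))).
      pose proof (Rabs_pos (Dblock a a' b b' m2 x)).
      destruct m1 as [|[|m1]]; try lia.
      + destruct m2 as [|[|m2]]; try lia.
        * rewrite HD1. unfold gblock; simpl. specialize (HbR x Hx).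
          specialize (Hmaxb (b x) ltac:(lra)). pose proof (Hb1 (b x) (HbI x Hx)).
          rewrite Rabs_left1 by lra. apply Rle_trans with be; [|apply Rmax_r].
          apply Rle_trans with (- b' (b x) * 1); [apply Rmult_le_compat_l; lra | lra].
        * pose proof (HBa (S (S m2)) x ltac:(lia) Hx).
          apply Rle_trans with al; [|apply Rmax_l]. nra.
      + pose proof (HBa (S (S m1)) _ ltac:(lia) Iy).
        apply Rle_trans with al; [|apply Rmax_l]. nra. }
  split; [split; auto|].
  set (mu := Rmin (eta 1%nat ^ 2) (eta 2%nat)).
  assert (Hmu0 : 0 <= mu) by (apply Rmin_glb; nra).
  assert (Hpair : forall m1 m2 y, (1 <= m1)%nat -> (1 <= m2)%nat -> inI y ->
     Rabs (Dblock a a' b b' m1 (gblock a b m2 y) * Dblock a a' b b' m2 y) <= mu).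
  { intros m1 m2 y H1 H2 Hy. apply Rmin_glb.
    - assert (Iy : inI (gblock a b m2 y)) by (apply (gcomp_I a b (m2 :: nil)); auto).
      pose proof (HUB (m1 :: nil) _ ltac:(auto) ltac:(simpl; lia) Iy).
      pose proof (HUB (m2 :: nil) _ ltac:(auto) ltac:(simpl; lia) Hy).
      rewrite E1 in H, H0. simpl length in H, H0. rewrite Rabs_mult.
      pose proof (Rabs_pos (Dblock a a' b b' m1 (gblock a b m2 y))).
      pose proof (Rabs_pos (Dblock a a' b b' m2 y)). simpl. nra.
    - rewrite <- E2. apply (HUB (m1 :: m2 :: nil)); simpl; auto. }
  assert (Hind : forall k ms x, (length ms <= k)%nat -> Forall (fun m => (1 <= m)%nat) ms -> inI x ->
     Rabs (Dcomp a a' b b' ms x) <= mu ^ (length ms / 2)).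
  { induction k as [|k IH]; intros ms x Hl HF Hx.
    - destruct ms; simpl in Hl; try lia. simpl. rewrite Rabs_R1. lra.
    - destruct ms as [|m1 [|m2 rest]].
      + simpl. rewrite Rabs_R1. lra.
      + rewrite E1. simpl. auto.
      + inversion HF; subst. inversion H2; subst.
        change (Dcomp a a' b b' (m1 :: m2 :: rest) x) with
          (Dblock a a' b b' m1 (gblock a b m2 (gcomp a b rest x)) *
           (Dblock a a' b b' m2 (gcomp a b rest x) * Dcomp a a' b b' rest x)).
        rewrite <- Rmult_assoc, Rabs_mult.
        change (length (m1 :: m2 :: rest)) with (S (S (length rest))). rewrite div2SS. simpl pow.
        assert (Iy : inI (gcomp a b rest x)) by (apply gcomp_I; auto).
        apply Rmult_le_compat; try apply Rabs_pos.
        * apply Hpair; auto.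
        * apply IH; auto. simpl in Hl. lia. }
  intros n Hn. split.
  - apply HLUB; [lia|]. intros ms x HF Hl Hx.
    replace (1 + (n - 2) / 2)%nat with (n / 2)%nat.
    + rewrite <- Hl. apply (Hind (length ms)); auto.
    + replace n with (S (S (n - 2))) at 1 by lia. rewrite div2SS. lia.
  - destruct (Req_dec (b' 0) (-1)) as [E|NE].
    + destruct (PA2 E) as [_ H]. apply Rle_lt_trans with (eta 2%nat); auto. apply Rmin_r.
    + assert (H : eta 1%nat < 1) by (apply PA1; lra).
      apply Rle_lt_trans with (eta 1%nat ^ 2); [apply Rmin_l|]. simpl. nra.
Qed.
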